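(* Let $(X,\tau)$ be a topological space with an operation $\gamma$ on $\tau$ and $A\subseteq X$. Then (1) $A$ is $\gamma^{*}$-semi-open if and only if $A\cap sbd_{\gamma^{*}}(A)=\emptyset$; (2) $A$ is $\gamma^{*}$-semi-closed if and only if $sbd_{\gamma^{*}}(A)\subseteq A$.
   Context: An operation on $\tau$ is a map $\gamma:\tau\to P(X)$, $V\mapsto V^\gamma$, with $V\subseteq V^\gamma$ for every $V\in\tau$. For $A\subseteq X$, $int_\gamma(A)=\{x\in A: \text{there is an open } N \text{ with } x\in N,\ N^\gamma\subseteq A\}$; $A$ is $\gamma$-open iff $A=int_\gamma(A)$. $cl_\gamma(A)$ is the set of $x\in X$ such that $U^\gamma\cap A\neq\emptyset$ for every open $U\ni x$. $A$ is $\gamma^{*}$-semi-open if there is a $\gamma$-open set $O$ with $O\subseteq A\subseteq cl_\gamma(O)$; $A$ is $\gamma^{*}$-semi-closed if $X-A$ is $\gamma^{*}$-semi-open. $scl_{\gamma^{*}}(A)$ is the intersection of all $\gamma^{*}$-semi-closed sets containing $A$; $sbd_{\gamma^{*}}(A)=scl_{\gamma^{*}}(A)\cap scl_{\gamma^{*}}(X-A)$. *)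

(* Defs.v *)
From HB Require Import structures.
From mathcomp Require Import all_boot all_order.
From mathcomp Require Import boolp classical_sets topology.
Set Implicit Arguments. Unset Strict Implicit. Unset Printing Implicit Defensive.
Local Open Scope classical_set_scope.

(* An operation gamma on tau is given
   as a function on sets; only its values on open sets are ever used, and the
   condition V ⊆ V^gamma for open V is an explicit hypothesis. *)
Definition is_operation (T : topologicalType) (gamma : set T -> set T) : Prop :=
  forall V : set T, open V -> V `<=` gamma V.

Section GammaDefs.
Context (T : topologicalType) (gamma : set T -> set T).

Definition int_gamma (A : set T) : set T :=
  [set x | A x /\ exists N : set T, [/\ open N, N x & gamma N `<=` A]].

Definition gamma_open (A : set T) : Prop := A = int_gamma A.

Definition cl_gamma (A : set T) : set T :=
  [set x | forall U : set T, open U -> U x -> gamma U `&` A !=set0].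

Definition gamma_semi_open (A : set T) : Prop :=
  exists O : set T, [/\ gamma_open O, O `<=` A & A `<=` cl_gamma O].

Definition gamma_semi_closed (A : set T) : Prop := gamma_semi_open (~` A).

Definition scl_gamma (A : set T) : set T :=
  \bigcap_(F in [set F | gamma_semi_closed F /\ A `<=` F]) F.

Definition sbd_gamma (A : set T) : set T :=
  scl_gamma A `&` scl_gamma (~` A).

End GammaDefs.

(* Main.v *)
Require Import Defs.
From mathcomp Require Import all_boot all_order.
From mathcomp Require Import boolp classical_sets topology.
Local Open Scope classical_set_scope.

Section S.
Context (T : topologicalType) (gamma : set T -> set T).

Lemma cl_mono (O O' : set T) : O `<=` O' -> cl_gamma gamma O `<=` cl_gamma gamma O'.
Proof.
move=> sub x Hx U oU Ux; have [y [Hy1 Hy2]] := Hx U oU Ux.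
by exists y; split => //; apply: sub.
Qed.

Lemma scl_closed (B : set T) : gamma_semi_closed gamma (scl_gamma gamma B).
Proof.
rewrite /gamma_semi_closed /gamma_semi_open.
pose S := [set F | gamma_semi_closed gamma F /\ B `<=` F].
have hO : forall F, S F -> exists O, [/\ gamma_open gamma O, O `<=` ~` F
   & ~` F `<=` cl_gamma gamma O] by move=> F [[O HO] _]; exists O.
pose O := [set x | exists F, S F /\ exists O', [/\ gamma_open gamma O', O' `<=` ~` F,
   ~` F `<=` cl_gamma gamma O' & O' x]].
exists O; split.
- rewrite /gamma_open; apply/seteqP; split; last by move=> x [].
  move=> x [F [SF [O' [gO' s1 s2 O'x]]]]; split; first by exists F; split => //; exists O'.
  have : int_gamma gamma O' x by rewrite -gO'.
  move=> [_ [N [oN Nx gN]]]; exists N; split => // y gy.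
  exists F; split => //; exists O'; split => //; exact: gN.
- move=> x [F [SF [O' [gO' s1 s2 O'x]]]] H; apply: (s1 x O'x); exact: H F SF.
- move=> x Hx.
  have [F SF nF] : exists2 F, S F & ~ F x.
    apply: contra_notP Hx => H F SF; apply: contra_notP H => nF; by exists F.
  have [O' [gO' s1 s2]] := hO F SF.
  apply: (@cl_mono O'); last exact: s2.
  move=> y O'y; exists F; split => //; exists O'; by split.
Qed.

Lemma semiclosed_iff (B : set T) : gamma_semi_closed gamma B <-> scl_gamma gamma B `<=` B.
Proof.
split.
- by move=> H x Hx; apply: Hx; split.
- move=> H; have -> : B = scl_gamma gamma B.
    by apply/seteqP; split => // x Bx F [_ ?]; auto.
  exact: scl_closed.
Qed.

Lemma sub_scl (B : set T) : B `<=` scl_gamma gamma B.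
Proof. by move=> x Bx F [_ H]; apply: H. Qed.

End S.

Theorem theorem3p19 (T : topologicalType) (gamma : set T -> set T)
  (hgamma : is_operation gamma) (A : set T) :
  (gamma_semi_open gamma A <-> A `&` sbd_gamma gamma A = set0) /\
  (gamma_semi_closed gamma A <-> sbd_gamma gamma A `<=` A).
Proof.
have e1 : gamma_semi_open gamma A <-> gamma_semi_closed gamma (~` A).
  by rewrite /gamma_semi_closed setCK.
split.
- rewrite e1 semiclosed_iff; split.
  + move=> H; apply/seteqP; split => // x [Ax [_ Hx]]; exact: (H x Hx Ax).
  + move=> H x Hx Ax.
    have : (A `&` sbd_gamma gamma A) x by split => //; split => //; exact: sub_scl.
    by rewrite H.
- rewrite semiclosed_iff; split.
  + by move=> H x [Hx _]; apply: H.
  + move=> H x Hx; have [//|nA] := pselect (A x).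
    have : sbd_gamma gamma A x by split => //; apply: sub_scl.
    by move/H.
Qed.
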